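(* Let $S$ be a semigroup that satisfies the F\o lner condition but not the proper F\o lner condition. Then there is $a\in S$ with $|Sa|<\infty$.
   Context: $S$ satisfies the F\o lner condition if for every $\varepsilon>0$ and finite $\mathcal F\subseteq S$ there is a finite non-empty $F\subseteq S$ with $|sF\cup F|\le(1+\varepsilon)|F|$ for all $s\in\mathcal F$ (where $sF=\{sf:f\in F\}$). $S$ satisfies the proper F\o lner condition if moreover for every $\varepsilon>0$, finite $\mathcal F\subseteq S$ and finite $A\subseteq S$, such an $F$ can be chosen with $A\subseteq F$. $Sa=\{sa:s\in S\}$. *)

(* Defs.v *)
(* semigroups are arbitrary (possibly infinite) types with an
   associative operation; finite subsets are represented by duplicate-free lists. *)
From Stdlib Require Import Reals List.
Import ListNotations.
Open Scope R_scope.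

Definition card_is {S : Type} (A : S -> Prop) (n : nat) : Prop :=
  exists l : list S, NoDup l /\ (forall x, A x <-> In x l) /\ length l = n.

Definition is_finite {S : Type} (A : S -> Prop) : Prop :=
  exists l : list S, forall x, A x <-> In x l.

Definition translate_union {S : Type} (mul : S -> S -> S) (s : S) (F : list S)
  : S -> Prop :=
  fun x => In x F \/ exists f, In f F /\ x = mul s f.

Definition folner_set {S : Type} (mul : S -> S -> S) (eps : R) (calF F : list S)
  : Prop :=
  NoDup F /\ F <> [] /\
  forall s, In s calF ->
    exists n, card_is (translate_union mul s F) n /\
              INR n <= (1 + eps) * INR (length F).

Definition folner_condition {S : Type} (mul : S -> S -> S) : Prop :=
  forall (eps : R), 0 < eps -> forall calF : list S,
    exists F : list S, folner_set mul eps calF F.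

Definition proper_folner_condition {S : Type} (mul : S -> S -> S) : Prop :=
  forall (eps : R), 0 < eps -> forall calF A : list S,
    exists F : list S, folner_set mul eps calF F /\ incl A F.

(* Main.v *)
Require Import Defs.
From Stdlib Require Import Reals List.
From Stdlib Require Import Classical ClassicalEpsilon Lra Lia Arith.
Import ListNotations.
Open Scope R_scope.

Definition deq {S : Type} : forall x y : S, {x = y} + {x <> y} :=
  fun x y => excluded_middle_informative (x = y).

Lemma card_bound {S : Type} (P : S -> Prop) m l L :
  card_is P m -> (forall x, P x <-> In x L) -> NoDup l -> incl l L ->
  (length l <= m)%nat.
Proof.
  intros [k [Hk [HP Hl]]] HL Hn Hi. subst m.
  apply NoDup_incl_length; auto. intros x Hx. apply HP, HL, Hi, Hx.
Qed.

Lemma card_of_list {S : Type} (P : S -> Prop) L :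
  (forall x, P x <-> In x L) -> card_is P (length (nodup deq L)).
Proof.
  intros H. exists (nodup deq L). split; [apply NoDup_nodup|split; auto].
  intros x. rewrite nodup_In. apply H.
Qed.

Lemma final_lemma {S : Type} (mul : S -> S -> S) (eps : R) calF A G :
  0 < eps -> NoDup G -> G <> [] ->
  (forall s, In s calF -> exists m, card_is (translate_union mul s G) m /\
       INR m <= (1 + eps/2) * INR (length G)) ->
  2 * INR (length A) <= eps / 2 * INR (length G) ->
  exists F, folner_set mul eps calF F /\ incl A F.
Proof.
  intros He HG Hne HF HA.
  set (G' := nodup deq (G ++ A)).
  assert (HGG : incl G G') by (intros x Hx; unfold G'; rewrite nodup_In; apply in_or_app; auto).
  assert (Hlen : (length G <= length G')%nat) by (apply NoDup_incl_length; auto).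
  exists G'. split.
  2:{ intros x Hx; unfold G'; rewrite nodup_In; apply in_or_app; auto. }
  split; [apply NoDup_nodup|split].
  { destruct G as [|g G0]; [congruence|]. intros E. specialize (HGG g (or_introl eq_refl)).
    rewrite E in HGG. destruct HGG. }
  intros s Hs. destruct (HF s Hs) as [m [[lG [HlG [HPG HmG]]] Hm]].
  set (L := G' ++ map (mul s) G').
  assert (HL : forall x, translate_union mul s G' x <-> In x L).
  { intros x; unfold translate_union, L; rewrite in_app_iff, in_map_iff; split.
    - intros [H|[f [Hf ->]]]; [left; auto|right; exists f; auto].
    - intros [H|[f [<- Hf]]]; [left; auto|right; exists f; auto]. }
  exists (length (nodup deq L)). split; [apply card_of_list; auto|].
  assert (Hb : (length (nodup deq L) <= length (lG ++ A ++ map (mul s) A))%nat).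
  { apply NoDup_incl_length; [apply NoDup_nodup|].
    intros x Hx. rewrite nodup_In in Hx. unfold L in Hx.
    rewrite !in_app_iff, in_map_iff in *.
    destruct Hx as [Hx|[y [<- Hy]]].
    - unfold G' in Hx. rewrite nodup_In, in_app_iff in Hx.
      destruct Hx as [Hx|Hx]; [left; apply HPG; left; auto|right; left; auto].
    - unfold G' in Hy. rewrite nodup_In, in_app_iff in Hy.
      destruct Hy as [Hy|Hy].
      + left; apply HPG; right; exists y; auto.
      + right; right; exists y; auto. }
  rewrite !length_app, length_map in Hb. subst m.
  apply le_INR in Hb. apply le_INR in Hlen. rewrite !plus_INR in Hb.
  assert (0 <= INR (length G)) by apply pos_INR.
  nra.
Qed.

Lemma choose_list {S : Type} (P : S -> S -> Prop) (l : list S) :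
  (forall x, In x l -> exists y, P x y) ->
  exists U, forall x, In x l -> exists y, In y U /\ P x y.
Proof.
  induction l as [|a l IH]; intros H.
  - exists []. intros x [].
  - destruct (H a (or_introl eq_refl)) as [y Hy].
    destruct IH as [U HU]. { intros x Hx; apply H; right; auto. }
    exists (y :: U). intros x [<-|Hx].
    + exists y; split; [left|]; auto.
    + destruct (HU x Hx) as [z [Hz Pz]]. exists z; split; [right|]; auto.
Qed.

Theorem mainTheorem9 (S : Type) (mul : S -> S -> S)
  (mul_assoc : forall x y z, mul x (mul y z) = mul (mul x y) z) :
  folner_condition mul -> ~ proper_folner_condition mul ->
  exists a : S, is_finite (fun x => exists s, x = mul s a).
Proof.
  intros Hfol Hnp. apply NNPP. intros Hno. apply Hnp. clear Hnp.
  assert (Hinf : forall a, ~ is_finite (fun x => exists s, x = mul s a)).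
  { intros a Ha. apply Hno. exists a. auto. }
  clear Hno.
  intros eps He calF A.
  destruct (INR_unbounded (4 * INR (length A) / eps + 1)) as [M HM].
  assert (HM1 : 1 <= INR M).
  { assert (0 <= INR (length A)) by apply pos_INR.
    assert (0 <= 4 * INR (length A) / eps) by (unfold Rdiv; apply Rmult_le_pos; [lra|left; apply Rinv_0_lt_compat; lra]). lra. }
  assert (HMA : 2 * INR (length A) <= eps / 2 * INR M).
  { assert (4 * INR (length A) / eps * eps <= INR M * eps) by (apply Rmult_le_compat_r; lra).
    replace (4 * INR (length A) / eps * eps) with (4 * INR (length A)) in H by (field; lra).
    nra. }
  set (delta := Rmin (eps/2) (/ INR M)).
  assert (Hd0 : 0 < delta).
  { unfold delta. apply Rmin_glb_lt; [lra|apply Rinv_0_lt_compat; lra]. }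
  assert (Hd1 : delta <= eps/2) by apply Rmin_l.
  assert (Hd2 : delta <= / INR M) by apply Rmin_r.
  assert (Hsmall : forall T F, folner_set mul delta T F -> (length F < M)%nat ->
            forall s f, In s T -> In f F -> In (mul s f) F).
  { intros T F [HnF [HneF HcF]] HlF s f Hs Hf.
    destruct (HcF s Hs) as [m [[l [Hl [HPl Hml]]] Hm]].
    assert (Hinc : incl F l) by (intros x Hx; apply HPl; left; auto).
    assert (Hle : (m <= length F)%nat).
    { apply lt_INR in HlF.
      assert (0 <= INR (length F)) by apply pos_INR.
      assert (delta * INR (length F) < 1).
      { apply Rle_lt_trans with (/ INR M * INR (length F)).
        - apply Rmult_le_compat_r; auto.
        - apply Rmult_lt_reg_l with (INR M); [lra|]. field_simplify; lra. }
      assert (INR m < INR (length F) + 1) by nra.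
      rewrite <- S_INR in H1. apply INR_lt in H1. lia. }
    subst m. apply (NoDup_length_incl HnF Hle Hinc). apply HPl.
    right. exists f. auto. }
  assert (Hclaim : forall k : nat,
    (exists F, folner_set mul delta calF F /\ (M <= length F)%nat) \/
    (exists G, NoDup G /\ (k <= length G)%nat /\
       forall s g, In s calF -> In g G -> In (mul s g) G)).
  { induction k as [|k IH].
    - right. exists []. split; [constructor|split; [lia|]]. intros s g _ [].
    - destruct IH as [IH|[G [HnG [HlG HiG]]]]; [left; auto|].
      assert (Hu : forall g, In g G -> exists u, ~ In (mul u g) G).
      { intros g Hg. apply NNPP. intros Hn. apply (Hinf g).
        exists (filter (fun x => if excluded_middle_informative (exists s, x = mul s g)
                                  then true else false) G).
        intros x. rewrite filter_In. split.
        - intros Hx. destruct Hx as [s ->]. split.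
          + apply NNPP; intros Hc; apply Hn; exists s; auto.
          + destruct excluded_middle_informative as [_|C]; auto. exfalso; apply C; eauto.
        - intros [_ Hx]. destruct excluded_middle_informative; auto; discriminate. }
      destruct (choose_list (fun g u => ~ In (mul u g) G) G Hu) as [U HU].
      destruct (Hfol delta Hd0 (calF ++ U)) as [F HF].
      destruct (le_lt_dec M (length F)) as [HMF|HMF].
      + left. exists F. split; auto.
        destruct HF as [a [b c]]. split; [auto|split; [auto|]].
        intros s Hs. apply c. apply in_or_app; auto.
      + right. pose proof (Hsmall _ _ HF HMF) as HinvF.
        assert (Hy : exists y, In y F /\ ~ In y G).
        { destruct HF as [_ [HneF _]]. destruct F as [|f0 F0]; [congruence|].
          destruct (classic (In f0 G)) as [Hf0|Hf0].
          - destruct (HU f0 Hf0) as [u [Hu1 Hu2]]. exists (mul u f0). split; auto.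
            apply HinvF; [apply in_or_app; right; auto|left; auto].
          - exists f0; split; [left|]; auto. }
        destruct Hy as [y [HyF HyG]].
        exists (nodup deq (G ++ F)). split; [apply NoDup_nodup|split].
        * assert (length (y :: G) <= length (nodup deq (G ++ F)))%nat.
          { apply NoDup_incl_length; [constructor; auto|].
            intros x [<-|Hx]; rewrite nodup_In; apply in_or_app; auto. }
          simpl in H. lia.
        * intros s g Hs Hg. rewrite nodup_In, in_app_iff in *.
          destruct Hg as [Hg|Hg]; [left; auto|right].
          apply HinvF; [apply in_or_app; left|]; auto. }
  destruct (Hclaim M) as [[F [HF HMF]]|[G [HnG [HlG HiG]]]].
  - destruct HF as [HnF [HneF HcF]].
    apply (final_lemma mul eps calF A F He HnF HneF).
    + intros s Hs. destruct (HcF s Hs) as [m [Hc Hm]]. exists m. split; auto.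
      assert (0 <= INR (length F)) by apply pos_INR. nra.
    + apply le_INR in HMF. nra.
  - apply (final_lemma mul eps calF A G He HnG).
    + destruct G; [simpl in HlG; apply le_INR in HlG; simpl in HlG; lra|congruence].
    + intros s Hs. exists (length G). split.
      * exists G. split; [auto|split; auto]. intros x. unfold translate_union.
        split; [intros [H|[f [Hf ->]]]; auto|auto].
      * assert (0 <= INR (length G)) by apply pos_INR. nra.
    + apply le_INR in HlG. nra.
Qed.
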